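(* Let $N\ge1$, $W\in\mathbb{R}^{N\times N}$, and let $h(s)$ be a node filter transfer function with $h(0)>0$ such that $h(s)$ decreases asymptotically as $1/s^g$ for some $g>0$ (i.e. $s^g h(s)\to1$ as $s\to+\infty$), and let $\tau=h(0)^{1/g}$ be its time constant. Let $G(s)=e^{\mathrm T}(I-h(s)W)^{-1}e\,h(s)$ with $e=\frac{1}{\sqrt N}(1,\dots,1)^{\mathrm T}$ be the network transfer function, and let $\kappa_n$ be the chain motif cumulants of $W$; assume the connection strength is small enough that $G(s)=\big(1-\sum_{n\ge1}N^n\kappa_n h(s)^n\big)^{-1}h(s)$ holds with convergent series for all real $s\ge0$. Then the time constant of $G$ equals $\big(f(\tau^g)\big)^{1/g}$, where $$f(z)=\frac{z}{1-N\kappa_1 z-N^2\kappa_2 z^2-\cdots}=\frac{z}{1-\sum_{n\ge1}N^n\kappa_n z^n}.$$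
   Context: Chain motif moments: $\mu_n=\frac{1}{N^{n+1}}\sum_{i,j}(W^n)_{ij}$ for $n\ge1$. Chain motif cumulants $\kappa_n$ are defined recursively by $\mu_n=\sum\kappa_{n_1}\cdots\kappa_{n_t}$, summing over all compositions $(n_1,\dots,n_t)$ of $n$ into positive integers. Time constant (''frequency-cutoff'' time constant): for a filter $F$ with $F(0)>0$ whose transfer function decays like $1/s^g$ at high frequency ($s^gF(s)\to1$), the cutoff frequency $\omega_c$ is where the low-frequency gain $F(0)$ meets the high-frequency asymptote $1/\omega^g$, i.e. $\omega_c=F(0)^{-1/g}$, and the time constant is $1/\omega_c=F(0)^{1/g}$. *)

(* Defs.v *)
From HB Require Import structures.
From mathcomp Require Import all_boot all_order all_algebra.
From mathcomp Require Import all_classical all_reals all_analysis.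
Set Implicit Arguments. Unset Strict Implicit. Unset Printing Implicit Defensive.
Import Order.TTheory GRing.Theory Num.Theory.
Import numFieldNormedType.Exports.
Local Open Scope classical_set_scope.
Local Open Scope ring_scope.

(* Compositions of n: sequences of positive integers summing to n.
   [comps_rec fuel n] uses fuel >= n (each step decreases n by >= 1). *)
Fixpoint comps_rec (fuel n : nat) : seq (seq nat) :=
  match fuel with
  | 0 => if n == 0%N then [:: [::]] else [::]
  | fuel'.+1 =>
      if n == 0%N then [:: [::]]
      else flatten [seq [seq k :: c | c <- comps_rec fuel' (n - k)] | k <- iota 1 n]
  end.
Definition compositions (n : nat) : seq (seq nat) := comps_rec n n.

Definition chain_moment (R : realType) (N : nat) (W : 'M[R]_N) (n : nat) : R :=
  (N%:R ^+ n.+1)^-1 * \sum_(i < N) \sum_(j < N) (W ^+ n) i j.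

Definition is_chain_cumulants (R : realType) (N : nat) (W : 'M[R]_N)
  (kappa : nat -> R) : Prop :=
  forall n : nat, (1 <= n)%N ->
    chain_moment W n = \sum_(c <- compositions n) \prod_(k <- c) kappa k.

Definition evec (R : realType) (N : nat) : 'cV[R]_N :=
  const_mx (Num.sqrt (N%:R))^-1.

Definition net_transfer (R : realType) (N : nat) (W : 'M[R]_N) (h : R -> R)
  (s : R) : R :=
  ((evec R N)^T *m invmx (1%:M - h s *: W) *m evec R N) ord0 ord0 * h s.

Definition cum_coef (R : realType) (N : nat) (kappa : nat -> R) (n : nat) : R :=
  if n is 0 then 0 else N%:R ^+ n * kappa n.

Definition cum_partial (R : realType) (N : nat) (kappa : nat -> R) (z : R) :=
  series (fun n => cum_coef N kappa n * z ^+ n).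

Definition cum_series (R : realType) (N : nat) (kappa : nat -> R) (z : R) : R :=
  lim (cum_partial N kappa z @ \oo).

Definition f_fun (R : realType) (N : nat) (kappa : nat -> R) (z : R) : R :=
  z / (1 - cum_series N kappa z).

Definition decays_like (R : realType) (g : R) (F : R -> R) : Prop :=
  (fun s => s `^ g * F s) @ +oo --> (1 : R).

Definition time_constant (R : realType) (g : R) (F : R -> R) : R :=
  F 0 `^ g^-1.

(* Main.v *)
Require Import Defs.
From HB Require Import structures.
From mathcomp Require Import all_boot all_order all_algebra.
From mathcomp Require Import all_classical all_reals all_analysis.
From mathcomp Require Import ring lra.
Import Order.TTheory GRing.Theory Num.Theory.
Import numFieldNormedType.Exports.
Local Open Scope classical_set_scope.
Local Open Scope ring_scope.

Lemma geo_half (R : realType) k : \sum_(n < k) (2^-1 : R) ^+ n <= 2.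
Proof.
suff -> : \sum_(n < k) (2^-1 : R) ^+ n = 2 - 2 * (2^-1) ^+ k.
  by rewrite lerBlDr lerDl mulr_ge0 // exprn_ge0.
elim: k => [|k IH]; first by rewrite big_ord0 expr0; lra.
rewrite big_ord_recr /= IH exprS; by field.
Qed.

Lemma term_bound (R : realType) (c : R) (m : nat) (h0 M z : R) :
  0 < h0 -> `|c * h0 ^+ m.+1| <= M -> `|z| <= h0 / 2 ->
  `|c * z ^+ m.+1| <= (2 * M / h0) * `|z| * (2^-1) ^+ m.+1.
Proof.
move=> h0p cM zb.
have e1 : `|c * z ^+ m.+1| <= `|c| * `|z| * (h0 / 2) ^+ m.
  rewrite normrM normrX exprS mulrA ler_wpM2l //.
  by rewrite lerXn2r // nnegrE // ltW // divr_gt0.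
apply: (le_trans e1).
have -> : `|c| * `|z| * (h0 / 2) ^+ m = (`|c * h0 ^+ m.+1|) * (2 / h0 * `|z| * (2^-1) ^+ m.+1).
  rewrite normrM normrX (gtr0_norm h0p) !exprMn !exprS; field.
  by rewrite gt_eqF.
rewrite [X in _ <= X](_ : _ = M * (2 / h0 * `|z| * 2^-1 ^+ m.+1)); last by field; rewrite gt_eqF.
by rewrite ler_wpM2r // !mulr_ge0 // ?invr_ge0 ltW.
Qed.

Lemma series_bound {R : realType} (c : nat -> R) (h0 M z : R) :
  0 < h0 -> c 0%N = 0 -> (forall n, `|c n * h0 ^+ n| <= M) -> `|z| <= h0 / 2 ->
  forall k, `|series (fun n => c n * z ^+ n) k| <= 4 * M / h0 * `|z|.
Proof.
move=> h0p c0 cM zb k.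
have M0 : 0 <= M by apply: le_trans (cM 0%N); rewrite normr_ge0.
rewrite /series /= big_mkord.
apply: (le_trans (ler_norm_sum _ _ _)).
apply: (@le_trans _ _ (\sum_(n < k) (2 * M / h0 * `|z|) * 2^-1 ^+ n)).
  apply: ler_sum => -[[|m] /= _] _; first by rewrite c0 mul0r normr0 mulr_ge0 ?exprn_ge0 // !mulr_ge0 // invr_ge0 ltW.
  exact: term_bound.
rewrite -mulr_sumr.
rewrite [X in _ <= X](_ : _ = (2 * M / h0 * `|z|) * 2); last by field; rewrite gt_eqF.
by rewrite ler_wpM2l ?geo_half // !mulr_ge0 // invr_ge0 ltW.
Qed.

Lemma lim_norm_bound (R : realType) (u : nat -> R) B :
  cvgn u -> (forall k, `|u k| <= B) -> `|lim (u @ \oo)| <= B.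
Proof.
move=> cu ub; rewrite ler_norml; apply/andP; split.
  by apply: limr_ge => //; near=> k; have := ub k; rewrite ler_norml => /andP[].
by apply: limr_le => //; near=> k; have := ub k; rewrite ler_norml => /andP[].
Unshelve. all: end_near.
Qed.

Theorem theorem2 (R : realType) (N : nat) (W : 'M[R]_N) (h : R -> R) (g : R)
  (kappa : nat -> R) :
  (0 < N)%N ->
  0 < h 0 ->
  0 < g ->
  decays_like g h ->
  is_chain_cumulants W kappa ->
  (forall s : R, 0 <= s -> (1%:M - h s *: W) \in unitmx) ->
  (forall s : R, 0 <= s -> cvg (cum_partial N kappa (h s) @ \oo)) ->
  (forall s : R, 0 <= s ->
     net_transfer W h s = (1 - cum_series N kappa (h s))^-1 * h s) ->
  let tau := time_constant g h in
  decays_like g (net_transfer W h) /\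
  time_constant g (net_transfer W h) = f_fun N kappa (tau `^ g) `^ g^-1.
Proof.
move=> Npos h0p gp hdec hcum hunit hcvg hG tau.
split; last first.
  rewrite /time_constant hG // /f_fun /tau /time_constant -powRrM mulVf ?(gt_eqF gp) //.
  by rewrite powRr1 ?(ltW h0p) // mulrC.
set c := fun n => cum_coef N kappa n.
have c0 : c 0%N = 0 by [].
have [M M1 HM] : exists2 M : R, 0 < M & forall n, `|c n * h 0 ^+ n| <= M.
  have := hcvg 0 (lexx _) => cv0.
  have := cvg_seq_bounded (cvgP _ (cvg_series_cvg_0 cv0)).
  move=> [M0 [_ HM0]].
  exists (`|M0| + 1); first by rewrite ltr_wpDl.
  move=> n; apply: (HM0 (`|M0| + 1)) => //.
  by rewrite (le_lt_trans (ler_norm _)) // ltrDl.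
have hsmall : forall d : R, 0 < d -> \forall s \near +oo, `|h s| <= d.
  move=> d dp.
  have hd : (fun s => s `^ g * h s) @ +oo --> (1:R) := hdec.
  move: (hd) => /cvgr_dist_le /(_ 1 ltr01) H1.
  have Hgt := nbhs_pinfty_gt (num_real ((2 / d) `^ g^-1)).
  near=> s.
  have sS : (2 / d) `^ g^-1 < s by near: s.
  have s0 : 0 < s by apply: le_lt_trans sS; exact: powR_ge0.
  have sg0 : 0 < s `^ g by apply: powR_gt0.
  have e1 : `|s `^ g * h s| <= 2.
    have H : `|1 - s `^ g * h s| <= 1 by near: s.
    move: H; rewrite !ler_norml => /andP[Ha Hb]; apply/andP; split; lra.
  have e2 : 2 / d <= s `^ g.
    have -> : 2 / d = ((2 / d) `^ g^-1) `^ g.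
      by rewrite -powRrM mulVf ?(gt_eqF gp) // powRr1 // divr_ge0 // ltW.
    apply: ge0_ler_powR; rewrite ?nnegrE ?powR_ge0 ?(ltW gp) ?(ltW s0) ?(ltW sS) //.
  have -> : h s = (s `^ g * h s) / s `^ g by field; rewrite gt_eqF.
  rewrite normrM normfV (gtr0_norm sg0) ler_pdivrMr //.
  apply: (le_trans e1).
  by rewrite -ler_pdivrMl // mulrC.
have Sto0 : (fun s => cum_series N kappa (h s)) @ +oo --> (0:R).
  apply/cvgrPdist_le => e ep.
  set d := Num.min (h 0 / 2) (e * h 0 / (4 * M)).
  have dp : 0 < d by rewrite lt_min; apply/andP; split; rewrite ?divr_gt0 ?mulr_gt0.
  have Hd := hsmall d dp.
  have Hpos := nbhs_pinfty_gt (num_real (0:R)).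
  near=> s.
  have s0 : 0 < s by near: s.
  have hs : `|h s| <= d by near: s.
  rewrite sub0r normrN.
  move: hs; rewrite le_min => /andP[hs1 hs2].
  have hb : `|cum_series N kappa (h s)| <= 4 * M / h 0 * `|h s|.
    apply: lim_norm_bound; first exact: hcvg (ltW s0).
    exact: (series_bound c (h 0) M (h s) h0p c0 HM hs1).
  apply: (le_trans hb).
  rewrite (@le_trans _ _ (4 * M / h 0 * (e * h 0 / (4 * M)))) //.
    by rewrite ler_wpM2l // !mulr_ge0 // ?invr_ge0 ltW.
  by rewrite le_eqVlt; apply/orP; left; apply/eqP; field; rewrite !gt_eqF.
have hd : (fun s => s `^ g * h s) @ +oo --> (1:R) := hdec.
rewrite /decays_like.
have E : {near +oo, (fun s => (s `^ g * h s) * (1 - cum_series N kappa (h s))^-1)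
   =1 (fun s => s `^ g * net_transfer W h s)}.
  have Hpos := nbhs_pinfty_gt (num_real (0:R)).
  near=> s.
  have s0 : 0 < s by near: s.
  by rewrite hG ?(ltW s0) // -mulrA [_^-1 * _]mulrC.
apply: cvg_trans (near_eq_cvg E) _.
suff : (fun s => (s `^ g * h s) * (1 - cum_series N kappa (h s))^-1) @ +oo --> ((1:R) * (1 - 0)^-1).
  by rewrite subr0 invr1 mulr1.
have Hl : (fun s => (1 - cum_series N kappa (h s))^-1) @ +oo --> ((1:R) - 0)^-1.
  apply: cvgV; first by rewrite subr0 oner_neq0.
  apply: cvgB => //; exact: cvg_cst.
exact: (cvgM hd Hl).
Unshelve. all: end_near.
Qed.
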